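(* Let $q$ be a prime power, $n=q^4-1$, and let $x=(a_0,a_1,a_2,a_3)\in\{1,\ldots,n-1\}$ with $I_x=\{x\}$. Then $I_x$ is a symmetric coset if and only if $a_2+a_3=q-1$, and $I_x$ is an SR-asymmetric coset if and only if $a_2+a_3>q-1$.
   Context: Identify $\mathbb{Z}_n$ with $\{0,\ldots,n-1\}$, all arithmetic modulo $n$. The $q$-adic 4-tuple $(a_0,a_1,a_2,a_3)$ denotes $a_0+a_1q+a_2q^2+a_3q^3$ with $0\le a_i<q$. The cyclotomic coset of $x$ with respect to $q^2$ is $I_x=\{x,\,q^2x\bmod n\}$; its minimal representative is its least element. The (Hermitian) reciprocal coset of $I_x$ is $I_{n-qx}$ (with $n-qx$ reduced modulo $n$). $I_x$ is symmetric if $I_{n-qx}=I_x$ and asymmetric otherwise. If $I_x$ is asymmetric with reciprocal coset $I_y$, with $x,y$ the minimal representatives and $x<y$, then $I_x$ is the FR-asymmetric coset and $I_y$ the SR-asymmetric coset of the pair. *)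

(* Defs.v *)
From mathcomp Require Import all_boot.
Set Implicit Arguments. Unset Strict Implicit. Unset Printing Implicit Defensive.

Definition prime_power (q : nat) : Prop :=
  exists p k, prime p /\ 0 < k /\ q = p ^ k.

Definition nn (q : nat) : nat := q ^ 4 - 1.

Definition digit (q x i : nat) : nat := (x %/ q ^ i) %% q.

(* cyclotomic coset of x w.r.t. q^2 modulo n: I_x = {x, q^2 x mod n} *)
Definition coset (q x : nat) : seq nat :=
  [:: x %% nn q; (q ^ 2 * x) %% nn q].

Definition minrep (q x : nat) : nat := minn (x %% nn q) ((q ^ 2 * x) %% nn q).

(* index of the (Hermitian) reciprocal coset: I_{n - qx}, reduced mod n *)
Definition recip (q x : nat) : nat := (nn q - (q * x) %% nn q) %% nn q.

Definition symmetric_coset (q x : nat) : Prop := coset q (recip q x) =i coset q x.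

Definition asymmetric_coset (q x : nat) : Prop := ~ symmetric_coset q x.

Definition SR_asymmetric_coset (q x : nat) : Prop :=
  asymmetric_coset q x /\ minrep q (recip q x) < minrep q x.

(* Main.v *)
Require Import Defs.
From mathcomp Require Import all_boot.
From mathcomp Require Import zify.

Lemma mod_uniq y n k r : r < n -> y = k * n + r -> y %% n = r.
Proof. by move=> Hr ->; rewrite modnMDl modn_small. Qed.

Lemma nnE q : nn q = q * q * (q * q) - 1.
Proof. by rewrite /nn !expnS expn0 !muln1 !mulnA. Qed.

Lemma sqm1 Q : (Q - 1) * (Q + 1) = Q * Q - 1.
Proof. by rewrite mulnBl mul1n mulnDr muln1 subnDA addnK. Qed.

Lemma lt_mulQ a Q : a < Q - 1 -> a * (Q + 1) < Q * Q - 1.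
Proof. by move=> h; rewrite -sqm1 ltn_pmul2r // addn1. Qed.

Lemma dig_bound q d e : d < q -> e < q -> d * q + e < q * q - 1 \/ (d = q - 1 /\ e = q - 1).
Proof.
move=> hd he; have qq : q <= q * q by rewrite leq_pmull; lia.
case: (ltnP d (q - 1)) => h1.
  left; have := leq_mul h1 (leqnn q); rewrite mulSn mulnBl mul1n; lia.
case: (ltnP e (q - 1)) => h2; last by right; lia.
left; have -> : d = q - 1 by lia.
rewrite mulnBl mul1n; lia.
Qed.

Lemma idE1 q d2 d3 : q * ((d3 * q + d2) * (q * q + 1)) + d3 = d3 * (q*q*(q*q)) + (d2 * q + d3)*(q*q+1).
Proof. nia. Qed.
Lemma idE2 q d2 d3 : d3 * q + d2 + (d2 * q + d3) = (d2 + d3) * (q + 1).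
Proof. nia. Qed.

Lemma coset_fix q c : 2 <= q -> c < q * q - 1 ->
  coset q (c * (q * q + 1)) = [:: c * (q * q + 1); c * (q * q + 1)].
Proof.
move=> hq hc.
have hlt : c * (q * q + 1) < nn q.
  rewrite nnE; set Q := q * q.
  have : Q * Q - 1 = (Q - 1) * (Q + 1) by rewrite mulnBl mul1n mulnDr muln1 subnDA addnK.
  move=> ->; rewrite ltn_pmul2r //; lia.

rewrite /coset -mulnn (modn_small hlt) (@mod_uniq _ _ c (c * (q * q + 1))) //.
move: hlt; rewrite nnE => hlt.
set Q := q * q in hlt *.
have hQ : 1 <= Q by rewrite /Q; nia.
nia.
Qed.

Theorem mainTheorem8 (q x : nat) :
  prime_power q ->
  1 <= x <= nn q - 1 ->
  coset q x =i [:: x] ->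
  (symmetric_coset q x <-> digit q x 2 + digit q x 3 = q - 1) /\
  (SR_asymmetric_coset q x <-> digit q x 2 + digit q x 3 > q - 1).
Proof.
move=> [p [k [pp [k0 eqq]]]] /andP[x1 xn] hc.
have hq : 2 <= q.
  have := prime_gt1 pp; rewrite eqq => h.
  apply: leq_trans h _; rewrite -{1}(expn1 p) leq_pexp2l //; exact: prime_gt0.
have hn := nnE q.
have xlt : x < nn q by lia.
have hQx : (q ^ 2 * x) %% nn q = x.
  have := hc ((q ^ 2 * x) %% nn q); rewrite /coset !inE eqxx orbT.
  by move/esym/eqP.
rewrite -mulnn in hQx.
set Q := q * q in hn hQx.
have hQ : 4 <= Q by exact: (leq_mul hq hq).
have QQ : Q <= Q * Q by rewrite leq_pmull; lia.
have xe := divn_eq x Q.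
set a := x %% Q in xe.
set b := x %/ Q in xe.
have aQ : a < Q by rewrite ltn_pmod //; lia.
have bQ : b < Q by rewrite ltn_divLR; nia.
have eQx : Q * x = b * nn q + (Q * a + b) by rewrite {1}xe hn; nia.
have hab : a = b.
  case: (ltnP (Q * a + b) (nn q)) => h.
    rewrite (@mod_uniq _ _ _ _ h eQx) in hQx.
    case: (ltngtP a b) => // h'.
      have : Q * a.+1 <= Q * b by rewrite leq_pmul2l; lia.
    rewrite mulnS.
      lia.
    have : Q * b.+1 <= Q * a by rewrite leq_pmul2l; lia.
    rewrite mulnS.
    lia.
  have : Q * a.+1 <= Q * Q by rewrite leq_pmul2l; lia.
    rewrite mulnS => ?.
  have e : Q * a + b = nn q by lia.
  rewrite eQx e -mulSnr modnMl in hQx; lia.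
have hd2 : digit q x 2 = a %% q.
  by rewrite /digit -mulnn -/Q -/b -hab.
have hd3 : digit q x 3 = a %/ q.
  rewrite /digit expnS -mulnn mulnC -/Q divnMA -/b -hab modn_small //.
  by rewrite ltn_divLR; lia.
rewrite hd2 hd3.
have ae := divn_eq a q.
set d2 := a %% q in ae *.
set d3 := a %/ q in ae *.
have d2q : d2 < q by rewrite ltn_pmod //; lia.
have d3q : d3 < q by rewrite ltn_divLR; lia.
have xe2 : x = a * (Q + 1) by lia.
have aQ1 : a < Q - 1.
  rewrite ltnNge; apply/negP => h.
  have := leq_mul h (leqnn (Q+1)).
  rewrite sqm1 -xe2 -hn; lia.
set a' := d2 * q + d3.
have qq : q <= q * q by rewrite leq_pmull; lia.
have a'Q1 : a' < Q - 1.
  case: (@dig_bound _ _ _ d2q d3q) => //; case=> e2 e3.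
  move: aQ1; rewrite ae e2 e3 /Q -sqm1; lia.
have a'0 : 0 < a'.
  have q0 : q != 0 by lia.
  rewrite lt0n /a' addn_eq0 muln_eq0 (negbTE q0) orbF.
  apply/negP => /andP[/eqP e2 /eqP e3].
  by move: x1; rewrite xe2 ae e2 e3.
have QQ1 : 1 <= Q * Q by lia.
have qxe : (q * x) %% nn q = a' * (Q + 1).
  apply: (@mod_uniq _ _ d3).
    by rewrite hn; apply: lt_mulQ.
  have e1 : q * x + d3 = d3 * (Q*Q) + a'*(Q+1) by rewrite xe2 ae /a' /Q; apply: idE1.
  have : d3 <= d3 * (Q * Q) by rewrite leq_pmulr.
  rewrite hn mulnBr muln1; lia.
set c := Q - 1 - a'.
have hr : recip q x = c * (Q + 1).
  have ha : 0 < a' * (Q + 1) by rewrite muln_gt0 a'0 addn1.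
  rewrite /recip qxe modn_small; last by rewrite ltn_subrL ha (leq_ltn_trans (leq0n x) xlt).
  by rewrite hn /c mulnBl sqm1.
have cQ : c < Q - 1 by rewrite /c ltn_subrL a'0 (leq_ltn_trans (leq0n a') a'Q1).
have Hx : coset q x = [:: x; x].
  rewrite xe2; exact: coset_fix.
have Hr : coset q (recip q x) = [:: recip q x; recip q x].
  rewrite hr; exact: coset_fix.
have symE : symmetric_coset q x <-> recip q x = x.
  rewrite /symmetric_coset Hx Hr; split.
    move=> h; have := h (recip q x); rewrite !inE eqxx orbb. by case: (recip q x =P x).
  by move=> ->.
have mrx : minrep q x = x by move: Hx; rewrite /coset /minrep; case=> -> ->; exact: minnn.
have mrr : minrep q (recip q x) = recip q x.
  by move: Hr; rewrite /coset /minrep; case=> -> ->; exact: minnn.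
have sumE : a + a' = (d2 + d3) * (q + 1) by rewrite ae /a'; apply: idE2.
have QE : Q - 1 = (q - 1) * (q + 1) by rewrite sqm1.
have q1 : 0 < q + 1 by rewrite addn1.
have Q1 : 0 < Q + 1 by rewrite addn1.
split.
  rewrite symE hr xe2 ; split.
    move/eqP; rewrite eqn_pmul2r // => /eqP hc'.
    apply/eqP; rewrite -(eqn_pmul2r q1).
    by apply/eqP; rewrite -sumE -QE -hc' /c subnK // ltnW.
  move=> h; congr (_ * _); rewrite /c.
  have : a + a' = Q - 1 by rewrite sumE QE h.
  by move=> <-; rewrite addnK.
rewrite /SR_asymmetric_coset /asymmetric_coset symE mrx mrr hr xe2.
have key : (c * (Q + 1) < a * (Q + 1)) = (q - 1 < d2 + d3).
  have -> : (q - 1 < d2 + d3) = ((q - 1) * (q + 1) < (d2 + d3) * (q + 1)) by rewrite ltn_pmul2r.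
  rewrite ltn_pmul2r // -sumE -QE /c.
  by rewrite ltn_subLR ?(ltnW a'Q1) // addnC.
rewrite key; split; first by case.
move=> h; split => //; move=> e; move: h; by rewrite -key e ltnn.
Qed.
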